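(* Let $(V,\{\nu_n\})$ be an $L^\infty$-MOS and $S\subseteq V$ an $L^\infty$-MOS ideal. Then $V/S$, with involution $(x+S)^*=x^*+S$ and with $M_n(V/S)_{sa}$ identified with $M_n(V)_{sa}/M_n(S)_{sa}$, together with the maps \[q_n(A+M_n(S)_{sa})=\inf\{\nu_n(B): B\in A+M_n(S)_{sa}\},\qquad A\in M_n(V)_{sa},\] is an $L^\infty$-MOS; in particular each $q_n$ is a proper gauge.
   Context: An $L^\infty$-MOS is a complex $*$-vector space $V$ ($M_n(V)$ with $(x_{ij})^*=(x_{ji}^* )$, self-adjoint part $M_n(V)_{sa}$) with proper gauges $\nu_n:M_n(V)_{sa}\to[0,\infty)$ (subadditive, positively homogeneous, $\nu_n(A)=\nu_n(-A)=0\Rightarrow A=0$) such that $\nu_k(X^*AX)\le\|X\|^2\nu_n(A)$ for scalar $X\in M_{n,k}$ and $\nu_{n+k}(A\oplus B)=\max\{\nu_n(A),\nu_k(B)\}$. For a gauged real vector space $(E,\nu)$, a subspace $T$ is a gauge ideal if whenever $x\in E$ and there are sequences $(a_j),(b_j)\subseteq T$ with $\nu(x-a_j)\to0$ and $\nu(b_j-x)\to0$, then $x\in T$. A self-adjoint subspace $S\subseteq V$ is an $L^\infty$-MOS ideal if $S_{sa}=S\cap V_{sa}$ is a gauge ideal of $(V_{sa},\nu_1)$. *)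

(* Defs.v *)
From Stdlib Require Import Reals ClassicalEpsilon.
From mathcomp Require Import ssreflect ssrfun ssrbool eqtype ssrnat seq fintype bigop.

Set Implicit Arguments.
Unset Strict Implicit.
Unset Printing Implicit Defensive.

Local Open Scope R_scope.

Record C := mkC { Re : R; Im : R }.
Definition C0 : C := mkC 0 0.
Definition C1 : C := mkC 1 0.
Definition Cadd (a b : C) : C := mkC (Re a + Re b) (Im a + Im b).
Definition Cmul (a b : C) : C :=
  mkC (Re a * Re b - Im a * Im b) (Re a * Im b + Im a * Re b).
Definition Cconj (a : C) : C := mkC (Re a) (- Im a).
Definition RtoC (t : R) : C := mkC t 0.
Definition Cnorm2 (a : C) : R := Re a * Re a + Im a * Im a.

Record starVS := StarVS {
  car :> Type;
  vzero : car;
  vadd : car -> car -> car;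
  vopp : car -> car;
  vscal : C -> car -> car;
  vstar : car -> car }.

Arguments vzero {s}.

Definition is_starVS (V : starVS) : Prop :=
  (forall x y z : V, vadd x (vadd y z) = vadd (vadd x y) z) /\
  (forall x y : V, vadd x y = vadd y x) /\
  (forall x : V, vadd x vzero = x) /\
  (forall x : V, vadd x (vopp x) = vzero) /\
  (forall x : V, vscal C1 x = x) /\
  (forall (a b : C) (x : V), vscal a (vscal b x) = vscal (Cmul a b) x) /\
  (forall (a b : C) (x : V), vscal (Cadd a b) x = vadd (vscal a x) (vscal b x)) /\
  (forall (a : C) (x y : V), vscal a (vadd x y) = vadd (vscal a x) (vscal a y)) /\
  (forall x y : V, vstar (vadd x y) = vadd (vstar x) (vstar y)) /\
  (forall (a : C) (x : V), vstar (vscal a x) = vscal (Cconj a) (vstar x)) /\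
  (forall x : V, vstar (vstar x) = x).

Definition mat (T : Type) (m n : nat) := 'I_m -> 'I_n -> T.

Section Mat.
Variable V : starVS.

Definition vsum (n : nat) (F : 'I_n -> V) : V := \big[@vadd V / vzero]_(i < n) F i.

Definition madd n (A B : mat V n n) : mat V n n := fun i j => vadd (A i j) (B i j).
Definition mopp n (A : mat V n n) : mat V n n := fun i j => vopp (A i j).
Definition mzero n : mat V n n := fun _ _ => vzero.
Definition mrscal n (t : R) (A : mat V n n) : mat V n n := fun i j => vscal (RtoC t) (A i j).
Definition mstar n (A : mat V n n) : mat V n n := fun i j => vstar (A j i).
Definition is_sa n (A : mat V n n) : Prop := mstar A = A.

(* X^* A X for a scalar matrix X in M_{n,k}(C):
   (X^* A X)_{pq} = sum_{i,j} conj(X_ip) X_jq A_ij *)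
Definition congr n k (X : mat C n k) (A : mat V n n) : mat V k k :=
  fun p q => vsum (fun i => vsum (fun j => vscal (Cmul (Cconj (X i p)) (X j q)) (A i j))).

Definition dsum n k (A : mat V n n) (B : mat V k k) : mat V (n + k) (n + k) :=
  fun i j => match fintype.split i, fintype.split j with
             | inl i', inl j' => A i' j'
             | inr i', inr j' => B i' j'
             | _, _ => vzero
             end.

(* the 1x1 matrix [x] : identification of V with M_1(V) *)
Definition m11 (x : V) : mat V 1 1 := fun _ _ => x.
End Mat.

Definition Csum (n : nat) (F : 'I_n -> C) : C := \big[Cadd / C0]_(i < n) F i.
Definition vnorm (n : nat) (v : 'I_n -> C) : R :=
  sqrt (\big[Rplus / 0]_(i < n) Cnorm2 (v i)).
Definition mvmul n k (X : mat C n k) (v : 'I_k -> C) : 'I_n -> C :=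
  fun i => Csum (fun j => Cmul (X i j) (v j)).
Definition is_opnorm n k (X : mat C n k) (r : R) : Prop :=
  is_lub (fun s => exists v : 'I_k -> C, vnorm v <= 1 /\ s = vnorm (mvmul X v)) r.

(* nu n is only relevant on M_n(V)_sa; indices n range over n >= 1 *)
Definition is_proper_gauge_sa (V : starVS) n (nun : mat V n n -> R) : Prop :=
  (forall A, is_sa A -> 0 <= nun A) /\
  (forall A B, is_sa A -> is_sa B -> nun (madd A B) <= nun A + nun B) /\
  (forall (t : R) A, 0 < t -> is_sa A -> nun (mrscal t A) = t * nun A) /\
  (forall A, is_sa A -> nun A = 0 -> nun (mopp A) = 0 -> A = @mzero V n).

Definition LinfMOS (V : starVS) (nu : forall n, mat V n n -> R) : Prop :=
  is_starVS V /\
  (forall n, (0 < n)%N -> is_proper_gauge_sa (nu n)) /\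
  (forall n k, (0 < n)%N -> (0 < k)%N ->
     forall (X : mat C n k) (A : mat V n n) (r : R), is_sa A -> is_opnorm X r ->
       nu k (congr X A) <= r * r * nu n A) /\
  (forall n k, (0 < n)%N -> (0 < k)%N ->
     forall (A : mat V n n) (B : mat V k k), is_sa A -> is_sa B ->
       nu (n + k)%N (dsum A B) = Rmax (nu n A) (nu k B)).

Definition is_sa_subspace (V : starVS) (S : V -> Prop) : Prop :=
  S vzero /\
  (forall x y, S x -> S y -> S (vadd x y)) /\
  (forall (a : C) x, S x -> S (vscal a x)) /\
  (forall x, S x -> S (vstar x)).

Definition gauge_ideal (V : starVS) (E T : V -> Prop) (nu : V -> R) : Prop :=
  forall x, E x ->
    (exists a b : nat -> V,
        (forall j, T (a j)) /\ (forall j, T (b j)) /\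
        Un_cv (fun j => nu (vadd x (vopp (a j)))) 0 /\
        Un_cv (fun j => nu (vadd (b j) (vopp x))) 0) ->
    T x.

Definition Vsa (V : starVS) (x : V) : Prop := vstar x = x.

Definition LinfMOS_ideal (V : starVS) (nu : forall n, mat V n n -> R) (S : V -> Prop) : Prop :=
  is_sa_subspace S /\
  gauge_ideal (@Vsa V) (fun x => S x /\ Vsa x) (fun x => nu 1%N (m11 x)).

Section Quotient.
Variables (V : starVS) (S : V -> Prop).

Definition cls (x : V) : V -> Prop := fun y => S (vadd x (vopp y)).
Definition Qcar : Type := {P : V -> Prop | exists x, P = cls x}.
Definition Qpi (x : V) : Qcar := exist _ (cls x) (ex_intro _ x erefl).
Definition Qrep (P : Qcar) : V :=
  proj1_sig (constructive_indefinite_description _ (proj2_sig P)).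

Definition quotVS : starVS :=
  @StarVS Qcar (Qpi vzero)
    (fun P Q => Qpi (vadd (Qrep P) (Qrep Q)))
    (fun P => Qpi (vopp (Qrep P)))
    (fun a P => Qpi (vscal a (Qrep P)))
    (fun P => Qpi (vstar (Qrep P))).

Definition lifts n (B : mat V n n) (Ahat : mat quotVS n n) : Prop :=
  forall i j, Qpi (B i j) = Ahat i j.

Definition is_inf (E : R -> Prop) (r : R) : Prop :=
  (forall s, E s -> r <= s) /\ (forall r', (forall s, E s -> r' <= s) -> r' <= r).

(* q_n(A + M_n(S)_sa) = inf { nu_n(B) : B in A + M_n(S)_sa },
   i.e. the infimum over all self-adjoint lifts B of Ahat. *)
Definition qgauge (nu : forall n, mat V n n -> R) n (Ahat : mat quotVS n n) : R :=
  epsilon (inhabits 0)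
    (is_inf (fun s => exists B : mat V n n, is_sa B /\ lifts B Ahat /\ s = nu n B)).
End Quotient.
Arguments qgauge : clear implicits.
Arguments quotVS : clear implicits.

(* Main.v *)
From HB Require Import structures.
From Stdlib Require Import Reals Lra ClassicalEpsilon FunctionalExtensionality
  PropExtensionality ProofIrrelevance.
From mathcomp Require Import ssreflect ssrfun ssrbool eqtype ssrnat seq fintype bigop.
Require Import Defs.

Set Implicit Arguments.
Unset Strict Implicit.
Unset Printing Implicit Defensive.
Set Warnings "-notation-overridden -redundant-canonical-projection".

Local Open Scope R_scope.

HB.instance Definition _ :=
  Monoid.isComLaw.Build R 0 Rplus (fun a b c => esym (Rplus_assoc a b c)) Rplus_comm Rplus_0_l.

Lemma Ceq (a b : C) : Re a = Re b -> Im a = Im b -> a = b.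
Proof. by case: a; case: b => ? ? ? ? /= -> ->. Qed.

Lemma CaddA : associative Cadd.
Proof. move=> a b c; apply: Ceq => /=; ring. Qed.
Lemma CaddC : commutative Cadd.
Proof. move=> a b; apply: Ceq => /=; ring. Qed.
Lemma Cadd0 : left_id C0 Cadd.
Proof. move=> a; apply: Ceq => /=; ring. Qed.
HB.instance Definition _ := Monoid.isComLaw.Build C C0 Cadd CaddA CaddC Cadd0.

Section Alg.
Variable V : starVS.
Hypothesis HV : is_starVS V.

Lemma addA (x y z : V) : vadd x (vadd y z) = vadd (vadd x y) z.
Proof. by case: HV. Qed.
Lemma addC (x y : V) : vadd x y = vadd y x.
Proof. by case: HV => _ []. Qed.
Lemma addx0 (x : V) : vadd x vzero = x.
Proof. by case: HV => _ [_ []]. Qed.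
Lemma add0x (x : V) : vadd vzero x = x.
Proof. by rewrite addC addx0. Qed.
Lemma addxN (x : V) : vadd x (vopp x) = vzero.
Proof. by case: HV => _ [_ [_ []]]. Qed.
Lemma scal1 (x : V) : vscal C1 x = x.
Proof. by case: HV => _ [_ [_ [_ []]]]. Qed.
Lemma scalM a b (x : V) : vscal a (vscal b x) = vscal (Cmul a b) x.
Proof. by case: HV => _ [_ [_ [_ [_ []]]]]. Qed.
Lemma scalDl a b (x : V) : vscal (Cadd a b) x = vadd (vscal a x) (vscal b x).
Proof. by case: HV => _ [_ [_ [_ [_ [_ []]]]]]. Qed.
Lemma scalDr a (x y : V) : vscal a (vadd x y) = vadd (vscal a x) (vscal a y).
Proof. by case: HV => _ [_ [_ [_ [_ [_ [_ []]]]]]]. Qed.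
Lemma starD (x y : V) : vstar (vadd x y) = vadd (vstar x) (vstar y).
Proof. by case: HV => _ [_ [_ [_ [_ [_ [_ [_ []]]]]]]]. Qed.
Lemma starZ a (x : V) : vstar (vscal a x) = vscal (Cconj a) (vstar x).
Proof. by case: HV => _ [_ [_ [_ [_ [_ [_ [_ [_ []]]]]]]]]. Qed.
Lemma starK (x : V) : vstar (vstar x) = x.
Proof. by case: HV => _ [_ [_ [_ [_ [_ [_ [_ [_ []]]]]]]]]. Qed.

HB.instance Definition _ := Monoid.isComLaw.Build V vzero (@vadd V)
  (fun a b c => addA a b c) addC add0x.

Lemma addcancel (x y z : V) : vadd x y = vadd x z -> y = z.
Proof.
move=> h; have := congr1 (vadd (vopp x)) h.
by rewrite !addA (addC (vopp x)) addxN !add0x.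
Qed.

Lemma scal0 (x : V) : vscal C0 x = vzero.
Proof.
apply: (@addcancel (vscal C0 x)); rewrite addx0 -scalDl; congr vscal.
by apply: Ceq => /=; ring.
Qed.

Lemma scalx0 a : vscal a (@vzero V) = vzero.
Proof.
apply: (@addcancel (vscal a vzero)); by rewrite addx0 -scalDr addx0.
Qed.

Lemma opp_uniq (x y : V) : vadd x y = vzero -> y = vopp x.
Proof. by move=> h; apply: (@addcancel x); rewrite h addxN. Qed.

Lemma oppE (x : V) : vopp x = vscal (RtoC (-1)) x.
Proof.
symmetry; apply: opp_uniq.
rewrite -{1}(scal1 x) -scalDl -(scal0 x); congr vscal; apply: Ceq => /=; ring.
Qed.

Lemma oppD (x y : V) : vopp (vadd x y) = vadd (vopp x) (vopp y).
Proof. by rewrite !oppE scalDr. Qed.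
Lemma oppK (x : V) : vopp (vopp x) = x.
Proof. by rewrite !oppE scalM -{2}(scal1 x); congr vscal; apply: Ceq => /=; ring. Qed.
Lemma addNx (x : V) : vadd (vopp x) x = vzero.
Proof. by rewrite addC addxN. Qed.
Lemma opp0 : vopp (@vzero V) = vzero.
Proof. by rewrite oppE scalx0. Qed.
Lemma scalN a (x : V) : vscal a (vopp x) = vopp (vscal a x).
Proof. by rewrite !oppE !scalM; congr vscal; apply: Ceq => /=; ring. Qed.
Lemma star0 : vstar (@vzero V) = vzero.
Proof. by rewrite -{1}(scal0 (vstar vzero)) starZ starK scalx0. Qed.
Lemma starN (x : V) : vstar (vopp x) = vopp (vstar x).
Proof. by rewrite !oppE starZ; congr vscal; apply: Ceq => /=; ring. Qed.

Lemma vsum_scal a n (F : 'I_n -> V) :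
  vscal a (vsum F) = vsum (fun i => vscal a (F i)).
Proof. rewrite /vsum; exact: (big_morph _ (scalDr a) (scalx0 a)). Qed.
Lemma vsum_star n (F : 'I_n -> V) :
  vstar (vsum F) = vsum (fun i => vstar (F i)).
Proof. rewrite /vsum; exact: (big_morph _ starD star0). Qed.
Lemma vsum_opp n (F : 'I_n -> V) :
  vopp (vsum F) = vsum (fun i => vopp (F i)).
Proof. rewrite /vsum; exact: (big_morph _ oppD opp0). Qed.
Lemma vsum_add n (F G : 'I_n -> V) :
  vsum (fun i => vadd (F i) (G i)) = vadd (vsum F) (vsum G).
Proof. by rewrite /vsum big_split. Qed.
Lemma vsum_ext n (F G : 'I_n -> V) : (forall i, F i = G i) -> vsum F = vsum G.
Proof. by move=> h; apply: eq_bigr => i _. Qed.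
Lemma vsum_exch n m (F : 'I_n -> 'I_m -> V) :
  vsum (fun i => vsum (fun j => F i j)) = vsum (fun j => vsum (fun i => F i j)).
Proof. by rewrite /vsum exchange_big. Qed.
Lemma vsum_one n (F : 'I_n -> V) j0 :
  (forall j, j != j0 -> F j = vzero) -> vsum F = F j0.
Proof.
move=> h; rewrite /vsum (bigD1 j0) //= big1 ?addx0 // => j /h //.
Qed.
Lemma vsum_two n (F : 'I_n -> V) a b : a != b ->
  (forall j, j != a -> j != b -> F j = vzero) -> vsum F = vadd (F a) (F b).
Proof.
move=> hab h; rewrite /vsum (bigD1 a) //= (bigD1 b) 1?eq_sym //= big1 ?addx0 //.
by move=> j /andP [] /h.
Qed.

End Alg.

Section AlgMore.
Variable V : starVS.
Hypothesis HV : is_starVS V.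

Lemma addACA (a b c d : V) : vadd (vadd a b) (vadd c d) = vadd (vadd a c) (vadd b d).
Proof.
by rewrite -!(addA HV) (addA HV b) (addC HV b) -(addA HV c).
Qed.
Lemma subDD (a b c d : V) :
  vadd (vadd a b) (vopp (vadd c d)) = vadd (vadd a (vopp c)) (vadd b (vopp d)).
Proof. by rewrite (oppD HV) addACA. Qed.
Lemma subNN (a c : V) : vadd (vopp a) (vopp (vopp c)) = vopp (vadd a (vopp c)).
Proof. by rewrite (oppD HV). Qed.
Lemma subZZ k (a c : V) : vadd (vscal k a) (vopp (vscal k c)) = vscal k (vadd a (vopp c)).
Proof. by rewrite (scalDr HV) (scalN HV). Qed.
Lemma subSS (a c : V) : vadd (vstar a) (vopp (vstar c)) = vstar (vadd a (vopp c)).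
Proof. by rewrite (starD HV) (starN HV). Qed.
Lemma subtrans (a b c : V) : vadd a (vopp c) = vadd (vadd a (vopp b)) (vadd b (vopp c)).
Proof. by rewrite -(addA HV) (addA HV (vopp b)) (addNx HV) (add0x HV). Qed.
Lemma subsym (a b : V) : vadd b (vopp a) = vopp (vadd a (vopp b)).
Proof. by rewrite (oppD HV) (oppK HV) (addC HV). Qed.
Lemma subxx (a : V) : vadd a (vopp a) = vzero.
Proof. exact: addxN. Qed.
End AlgMore.

Section Quot.
Variable V : starVS.
Hypothesis HV : is_starVS V.
Variable S : V -> Prop.
Hypothesis HS : is_sa_subspace S.

Local Notation QV := (quotVS V S).

Lemma S0 : S vzero. Proof. by case: HS. Qed.
Lemma SD x y : S x -> S y -> S (vadd x y). Proof. by case: HS => _ [h _]; apply: h. Qed.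
Lemma SZ a x : S x -> S (vscal a x). Proof. by case: HS => _ [_ [h _]]; apply: h. Qed.
Lemma Sst x : S x -> S (vstar x). Proof. by case: HS => _ [_ [_ h]]; apply: h. Qed.
Lemma SN x : S x -> S (vopp x). Proof. by move=> h; rewrite (oppE HV); apply: SZ. Qed.
Lemma Svsum n (F : 'I_n -> V) : (forall i, S (F i)) -> S (vsum F).
Proof. move=> h; rewrite /vsum; elim/big_ind: _ => //; [exact: S0|exact: SD]. Qed.

Lemma Qpi_eq x y : Qpi S x = Qpi S y <-> S (vadd x (vopp y)).
Proof.
split.
  move=> h; have := congr1 (fun P : Qcar S => proj1_sig P y) h; rewrite /= /cls => ->.
  rewrite (subxx HV); exact: S0.
move=> h; rewrite /Qpi; apply: subset_eq_compat.
apply: functional_extensionality => z; apply: propositional_extensionality.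
rewrite /cls; split => hz.
  by rewrite (subtrans HV y x); apply: SD => //; rewrite (subsym HV); apply: SN.
by rewrite (subtrans HV x y); apply: SD.
Qed.

Lemma Qpi_rep (P : QV) : Qpi S (Qrep P) = P.
Proof.
rewrite /Qrep; case: (constructive_indefinite_description _ _) => x hx /=.
case: P hx => p hp /= hx; rewrite /Qpi; apply: subset_eq_compat; by rewrite hx.
Qed.

Lemma Qsurj (P : QV) : exists x, P = Qpi S x.
Proof. by exists (Qrep P); rewrite Qpi_rep. Qed.

Lemma Qrep_Qpi x : S (vadd (Qrep (Qpi S x)) (vopp x)).
Proof. by apply/Qpi_eq; rewrite Qpi_rep. Qed.

Lemma Qzero : @vzero QV = Qpi S vzero. Proof. by []. Qed.
Lemma Qadd x y : @vadd QV (Qpi S x) (Qpi S y) = Qpi S (vadd x y).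
Proof. apply/Qpi_eq; rewrite (subDD HV); apply: SD; exact: Qrep_Qpi. Qed.
Lemma Qopp x : @vopp QV (Qpi S x) = Qpi S (vopp x).
Proof. apply/Qpi_eq; rewrite (subNN HV); apply: SN; exact: Qrep_Qpi. Qed.
Lemma Qscal a x : @vscal QV a (Qpi S x) = Qpi S (vscal a x).
Proof. apply/Qpi_eq; rewrite (subZZ HV); apply: SZ; exact: Qrep_Qpi. Qed.
Lemma Qstar x : @vstar QV (Qpi S x) = Qpi S (vstar x).
Proof. apply/Qpi_eq; rewrite (subSS HV); apply: Sst; exact: Qrep_Qpi. Qed.

Lemma quot_starVS : is_starVS QV.
Proof.
split; [|split; [|split; [|split; [|split; [|split; [|split; [|split; [|split; [|split]]]]]]]]].
- move=> P Q R; case: (Qsurj P) => x ->; case: (Qsurj Q) => y ->; case: (Qsurj R) => z ->.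
  by rewrite !Qadd (addA HV).
- move=> P Q; case: (Qsurj P) => x ->; case: (Qsurj Q) => y ->.
  by rewrite !Qadd (addC HV).
- move=> P; case: (Qsurj P) => x ->; by rewrite Qzero Qadd (addx0 HV).
- move=> P; case: (Qsurj P) => x ->; by rewrite Qopp Qadd (addxN HV).
- move=> P; case: (Qsurj P) => x ->; by rewrite Qscal (scal1 HV).
- move=> a b P; case: (Qsurj P) => x ->; by rewrite !Qscal (scalM HV).
- move=> a b P; case: (Qsurj P) => x ->; by rewrite !Qscal Qadd (scalDl HV).
- move=> a P Q; case: (Qsurj P) => x ->; case: (Qsurj Q) => y ->.
  by rewrite (Qadd x y) (Qscal a (vadd x y)) (Qscal a x) (Qscal a y) Qadd (scalDr HV).
- move=> P Q; case: (Qsurj P) => x ->; case: (Qsurj Q) => y ->.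
  by rewrite (Qadd x y) (Qstar (vadd x y)) (Qstar x) (Qstar y) Qadd (starD HV).
- move=> a P; case: (Qsurj P) => x ->; by rewrite (Qscal a x) (Qstar (vscal a x)) (Qstar x) Qscal (starZ HV).
- move=> P; case: (Qsurj P) => x ->; by rewrite !Qstar (starK HV).
Qed.

Lemma Qvsum n (F : 'I_n -> V) : Qpi S (vsum F) = @vsum QV n (fun i => Qpi S (F i)).
Proof. rewrite /vsum; apply: (big_morph (Qpi S)) => [x y|]; by rewrite ?Qadd. Qed.

End Quot.

Section Mats.
Variable W : starVS.
Hypothesis HW : is_starVS W.

Lemma saE n (A : mat W n n) : is_sa A -> forall i j, vstar (A j i) = A i j.
Proof. by move=> h i j; have := congr1 (fun M => M i j) h. Qed.
Lemma saI n (A : mat W n n) : (forall i j, vstar (A j i) = A i j) -> is_sa A.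
Proof.
move=> h; apply: functional_extensionality => i; apply: functional_extensionality => j.
exact: h.
Qed.

Lemma sa_madd n (A B : mat W n n) : is_sa A -> is_sa B -> is_sa (madd A B).
Proof.
move=> /saE hA /saE hB; apply: saI => i j; by rewrite /madd (starD HW) hA hB.
Qed.
Lemma sa_mopp n (A : mat W n n) : is_sa A -> is_sa (mopp A).
Proof. move=> /saE hA; apply: saI => i j; by rewrite /mopp (starN HW) hA. Qed.

Lemma conjR t : Cconj (RtoC t) = RtoC t.
Proof. apply: Ceq => /=; ring. Qed.

Lemma sa_mrscal n t (A : mat W n n) : is_sa A -> is_sa (mrscal t A).
Proof. move=> /saE hA; apply: saI => i j; by rewrite /mrscal (starZ HW) conjR hA. Qed.

Lemma sa_mzero n : is_sa (@mzero W n).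
Proof. apply: saI => i j; exact: (star0 HW). Qed.

Lemma sa_congr n k (X : mat C n k) (A : mat W n n) : is_sa A -> is_sa (congr X A).
Proof.
move=> /saE hA; apply: saI => p q; rewrite /congr (vsum_star HW).
rewrite (vsum_exch HW); apply: vsum_ext => i; rewrite (vsum_star HW).
apply: vsum_ext => j; rewrite (starZ HW) hA; congr vscal.
apply: Ceq => /=; ring.
Qed.

Lemma sa_dsum n k (A : mat W n n) (B : mat W k k) :
  is_sa A -> is_sa B -> is_sa (dsum A B).
Proof.
move=> /saE hA /saE hB; apply: saI => i j; rewrite /dsum.
case: (fintype.split i) => i'; case: (fintype.split j) => j' //; exact: (star0 HW).
Qed.

Lemma congr_madd n k (X : mat C n k) (A B : mat W n n) :
  congr X (madd A B) = madd (congr X A) (congr X B).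
Proof.
apply: functional_extensionality => p; apply: functional_extensionality => q.
rewrite /congr /madd -(vsum_add HW); apply: vsum_ext => i.
rewrite -(vsum_add HW); apply: vsum_ext => j; exact: (scalDr HW).
Qed.
Lemma congr_mopp n k (X : mat C n k) (A : mat W n n) :
  congr X (mopp A) = mopp (congr X A).
Proof.
apply: functional_extensionality => p; apply: functional_extensionality => q.
rewrite /congr /mopp (vsum_opp HW); apply: vsum_ext => i.
rewrite (vsum_opp HW); apply: vsum_ext => j; exact: (scalN HW).
Qed.

Lemma mrscalM n s t (A : mat W n n) : mrscal s (mrscal t A) = mrscal (s * t) A.
Proof.
apply: functional_extensionality => p; apply: functional_extensionality => q.
rewrite /mrscal (scalM HW); congr vscal; apply: Ceq => /=; ring.
Qed.
Lemma mrscal1 n (A : mat W n n) : mrscal 1 A = A.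
Proof.
apply: functional_extensionality => p; apply: functional_extensionality => q.
by rewrite /mrscal -{2}(scal1 HW (A p q)).
Qed.

End Mats.

Lemma half_twice (W : starVS) (HW : is_starVS W) (a : W) :
  vscal (RtoC (/2)) (vadd a a) = a.
Proof.
rewrite -{1 2}(scal1 HW a) -(scalDl HW) (scalM HW) -{2}(scal1 HW a); congr vscal.
apply: Ceq => /=; field.
Qed.

Section Lift.
Variable V : starVS.
Hypothesis HV : is_starVS V.
Variable S : V -> Prop.
Hypothesis HS : is_sa_subspace S.
Local Notation QV := (quotVS V S).
Let HQ := quot_starVS HV HS.

Lemma lift_ex n (A : mat QV n n) : exists B : mat V n n, lifts B A.
Proof. exists (fun i j => Qrep (A i j)) => i j; exact: Qpi_rep. Qed.

Lemma lifts_madd n (B C : mat V n n) (A D : mat QV n n) :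
  lifts B A -> lifts C D -> lifts (madd B C) (madd A D).
Proof. by move=> h1 h2 i j; rewrite /madd -(Qadd HV HS) h1 h2. Qed.
Lemma lifts_mopp n (B : mat V n n) (A : mat QV n n) :
  lifts B A -> lifts (mopp B) (mopp A).
Proof. by move=> h1 i j; rewrite /mopp -(Qopp HV HS) h1. Qed.
Lemma lifts_mrscal n t (B : mat V n n) (A : mat QV n n) :
  lifts B A -> lifts (mrscal t B) (mrscal t A).
Proof. by move=> h1 i j; rewrite /mrscal -(Qscal HV HS) h1. Qed.
Lemma lifts_mzero n : lifts (@mzero V n) (@mzero QV n).
Proof. by []. Qed.
Lemma lifts_congr n k (X : mat C n k) (B : mat V n n) (A : mat QV n n) :
  lifts B A -> lifts (congr X B) (congr X A).
Proof.
move=> h p q; rewrite /congr (Qvsum HV HS). apply: (@vsum_ext QV) => i.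
rewrite (Qvsum HV HS); apply: vsum_ext => j; by rewrite -(Qscal HV HS) h.
Qed.
Lemma lifts_dsum n k (B : mat V n n) (B' : mat V k k) (A : mat QV n n) (A' : mat QV k k) :
  lifts B A -> lifts B' A' -> lifts (dsum B B') (dsum A A').
Proof.
move=> h1 h2 i j; rewrite /dsum.
by case: (fintype.split i) => i'; case: (fintype.split j) => j'.
Qed.
Lemma lifts_diff n (B C : mat V n n) (A : mat QV n n) :
  lifts B A -> lifts C A -> forall i j, S (vadd (B i j) (vopp (C i j))).
Proof. by move=> h1 h2 i j; apply/(Qpi_eq HV HS); rewrite h1 h2. Qed.
Lemma lifts_zeroS n (B : mat V n n) :
  lifts B (@mzero QV n) -> forall i j, S (B i j).
Proof.
move=> h i j; rewrite -(addx0 HV (B i j)) -(opp0 HV); apply/(Qpi_eq HV HS); exact: h.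
Qed.
Lemma lifts_zero n (B : mat V n n) (A : mat QV n n) :
  lifts B A -> (forall i j, S (B i j)) -> A = @mzero QV n.
Proof.
move=> h hS; apply: functional_extensionality => i; apply: functional_extensionality => j.
rewrite -h /mzero Qzero; apply/(Qpi_eq HV HS); by rewrite (opp0 HV) (addx0 HV).
Qed.

Lemma lift_sa_ex n (A : mat QV n n) : is_sa A -> exists B : mat V n n, is_sa B /\ lifts B A.
Proof.
move=> hA; case: (lift_ex A) => B hB.
exists (mrscal (/2) (madd B (mstar B))); split.
  apply: sa_mrscal => //; apply: saI => i j.
  by rewrite /madd /mstar (starD HV) (starK HV) (addC HV).
move=> i j; rewrite /mrscal /madd /mstar -(Qscal HV HS) -(Qadd HV HS) -(Qstar HV HS).
by rewrite hB hB (saE hA) (half_twice HQ).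
Qed.

End Lift.

Lemma inf_ex (E : R -> Prop) :
  (exists s, E s) -> (forall s, E s -> 0 <= s) -> exists r, is_inf E r.
Proof.
move=> [s0 hs0] hpos.
have hb : bound (fun y => E (- y)).
  exists 0 => y hy; have := hpos _ hy; lra.
have hne : exists y, E (- y) by exists (- s0); rewrite Ropp_involutive.
case: (completeness _ hb hne) => m [hub hlub].
exists (- m); split.
  move=> s hs; have : - s <= m by apply: hub; rewrite Ropp_involutive.
  lra.
move=> r' hr'; have : m <= - r'.
  apply: hlub => y hy; have := hr' _ hy; lra.
lra.
Qed.

Lemma is_inf_unique (E : R -> Prop) r1 r2 : is_inf E r1 -> is_inf E r2 -> r1 = r2.
Proof. move=> [h1 h1'] [h2 h2']; apply: Rle_antisym; [apply: h2'|apply: h1'] => //. Qed.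

Lemma vnorm0 k : vnorm (fun _ : 'I_k => C0) = 0.
Proof.
rewrite /vnorm big1 ?sqrt_0 // => i _; rewrite /Cnorm2 /=; ring.
Qed.

Lemma opnorm_ex n k (X : mat C n k) M :
  (forall v, vnorm v <= 1 -> vnorm (mvmul X v) <= M) ->
  exists r, is_opnorm X r /\ 0 <= r /\ r <= M.
Proof.
move=> hM.
pose E := fun s => exists v : 'I_k -> C, vnorm v <= 1 /\ s = vnorm (mvmul X v).
have hb : bound E by exists M => s [v [hv ->]]; apply: hM.
have hne : E (vnorm (mvmul X (fun _ => C0))).
  by exists (fun _ => C0); split => //; rewrite vnorm0; lra.
case: (completeness _ hb (ex_intro _ _ hne)) => r [hub hlub].
exists r; split; first by split.
split.
  apply: Rle_trans (hub _ hne); exact: sqrt_pos.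
apply: hlub => s [v [hv ->]]; exact: hM.
Qed.

Lemma big_one (T : Type) (idx : T) (op : Monoid.com_law idx) n (F : 'I_n -> T) j0 :
  (forall j, j != j0 -> F j = idx) -> \big[op/idx]_(j < n) F j = F j0.
Proof.
move=> h; rewrite (bigD1 j0) //= big1 ?Monoid.mulm1 // => j /h //.
Qed.

Lemma Rsum_ge0 n (F : 'I_n -> R) : (forall i, 0 <= F i) -> 0 <= \big[Rplus/0]_(i < n) F i.
Proof. move=> h; elim/big_ind: _ => //; [lra | move=> x y; lra]. Qed.

Lemma Cnorm2_ge0 a : 0 <= Cnorm2 a.
Proof. rewrite /Cnorm2; nra. Qed.

Lemma Cnorm2M a b : Cnorm2 (Cmul a b) = Cnorm2 a * Cnorm2 b.
Proof. rewrite /Cnorm2 /=; ring. Qed.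

Lemma sqrt_le1 x : 0 <= x -> sqrt x <= 1 -> x <= 1.
Proof.
move=> h0 h1; rewrite -(sqrt_sqrt x h0).
have := sqrt_pos x; nra.
Qed.

Lemma key_le s c : 0 <= s -> 0 <= c -> c <= 1 -> s * c <= s.
Proof. move=> *; nra. Qed.

Lemma col_opnorm n (X : mat C n 1) : exists r, is_opnorm X r.
Proof.
suff h : forall v, vnorm v <= 1 -> vnorm (mvmul X v) <=
    sqrt (\big[Rplus/0]_(i < n) Cnorm2 (X i ord0)).
  by have [r [hr _]] := opnorm_ex h; exists r.
move=> v hv; rewrite /vnorm; apply: sqrt_le_1_alt.
have e : forall i, Cnorm2 (mvmul X v i) = Cnorm2 (X i ord0) * Cnorm2 (v ord0).
  by move=> i; rewrite /mvmul /Csum big_ord1 Cnorm2M.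
under eq_bigr => i _ do rewrite e.
have hv1 : Cnorm2 (v ord0) <= 1.
  by apply: sqrt_le1; [exact: Cnorm2_ge0 | move: hv; rewrite /vnorm big_ord1].
rewrite -(big_morph (fun x => x * Cnorm2 (v ord0)) (id1 := 0) (op1 := Rplus) (id2 := 0) (op2 := Rplus)).
- have := @Rsum_ge0 n (fun i => Cnorm2 (X i ord0)) (fun i => Cnorm2_ge0 _).
  move=> h1; exact: (key_le h1 (Cnorm2_ge0 _) hv1).
- move=> x y; ring.
- ring.
Qed.

Definition incl m N (f : 'I_m -> 'I_N) : mat C N m :=
  fun i p => if i == f p then C1 else C0.

Lemma incl_norm m N (f : 'I_m -> 'I_N) : injective f ->
  forall v, vnorm (mvmul (incl f) v) = vnorm v.
Proof.
move=> finj v; rewrite /vnorm; congr sqrt.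
have e : forall i, Cnorm2 (mvmul (incl f) v i) =
    \big[Rplus/0]_(p < m) (if i == f p then Cnorm2 (v p) else 0).
  move=> i; rewrite /mvmul /Csum /incl.
  case: (pickP (fun p => i == f p)) => [p0 /eqP hp0 | hnone].
  - rewrite (@big_one _ _ _ _ _ p0); last first.
      move=> j hj; rewrite hp0 (inj_eq finj) eq_sym (negbTE hj) /=; apply: Ceq => /=; ring.
    rewrite (@big_one _ _ _ _ _ p0); last by move=> j hj; rewrite hp0 (inj_eq finj) eq_sym (negbTE hj).
    rewrite hp0 eqxx; rewrite /Cnorm2 /=; ring.
  - rewrite big1; last by move=> p _; rewrite hnone; apply: Ceq => /=; ring.
    rewrite big1; last by move=> p _; rewrite hnone.
    rewrite /Cnorm2 /=; ring.
under eq_bigr => i _ do rewrite e.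
rewrite exchange_big /=; apply: eq_bigr => p _.
rewrite (@big_one _ _ _ _ _ (f p)) ?eqxx // => j /negbTE -> //.
Qed.

Lemma incl_opnorm m N (f : 'I_m -> 'I_N) : injective f ->
  exists r, is_opnorm (incl f) r /\ 0 <= r /\ r <= 1.
Proof. move=> finj; apply: opnorm_ex => v; by rewrite incl_norm. Qed.

Lemma cv0_squeeze (u : nat -> R) K : 0 <= K ->
  (forall m, 0 <= u m <= K * / (INR m + 1)) -> Un_cv u 0.
Proof.
move=> hK hu eps heps.
have [N hN] := INR_unbounded (K / eps).
exists N => m hm; rewrite /R_dist Rminus_0_r.
have hmN : INR N <= INR m by apply: le_INR.
have hx : 0 < INR m + 1 by have := pos_INR m; lra.
have hy : 0 < / (INR m + 1) by apply: Rinv_0_lt_compat.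
have hxy : / (INR m + 1) * (INR m + 1) = 1 by field; lra.
have hKe : K < eps * (INR m + 1).
  have : K = K / eps * eps by field; lra.
  move=> ->; nra.
have [h0 h1] := hu m; rewrite Rabs_right; last by lra.
nra.
Qed.

Section Mats2.
Variable W : starVS.
Hypothesis HW : is_starVS W.

Lemma vsum_zero n (F : 'I_n -> W) : (forall i, F i = vzero) -> vsum F = vzero.
Proof. by move=> h; rewrite /vsum big1 // => i _; apply: h. Qed.

Lemma congr_incl m N (f : 'I_m -> 'I_N) (M : mat W N N) : injective f ->
  forall p q, congr (incl f) M p q = M (f p) (f q).
Proof.
move=> finj p q; rewrite /congr (@vsum_one _ HW _ _ (f p)).
  rewrite (@vsum_one _ HW _ _ (f q)).
    rewrite /incl !eqxx -{2}(scal1 HW (M (f p) (f q))); congr vscal.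
    apply: Ceq => /=; ring.
  move=> j hj; rewrite /incl (negbTE hj) eqxx -(scal0 HW (M (f p) j)); congr vscal.
  apply: Ceq => /=; ring.
move=> i hi; apply: vsum_zero => j; rewrite /incl (negbTE hi).
rewrite -(scal0 HW (M i j)); congr vscal; apply: Ceq => /=; ring.
Qed.

Lemma split_l n k (p : 'I_n) : fintype.split (lshift k p) = inl p.
Proof. exact: (@unsplitK n k (inl p)). Qed.
Lemma split_r n k (p : 'I_k) : fintype.split (rshift n p) = inr p.
Proof. exact: (@unsplitK n k (inr p)). Qed.

Lemma congr_dsum_l n k (A : mat W n n) (B : mat W k k) :
  congr (incl (@lshift n k)) (dsum A B) = A.
Proof.
apply: functional_extensionality => p; apply: functional_extensionality => q.
by rewrite congr_incl; [rewrite /dsum !split_l | exact: lshift_inj].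
Qed.
Lemma congr_dsum_r n k (A : mat W n n) (B : mat W k k) :
  congr (incl (@rshift n k)) (dsum A B) = B.
Proof.
apply: functional_extensionality => p; apply: functional_extensionality => q.
by rewrite congr_incl; [rewrite /dsum !split_r | exact: rshift_inj].
Qed.

End Mats2.

Lemma div_le_l t a b : 0 < t -> a <= t * b -> a * / t <= b.
Proof.
move=> ht h; have hy : 0 < / t by apply: Rinv_0_lt_compat.
have e : t * b * / t = b by field; lra.
rewrite -e; apply: Rmult_le_compat_r; lra.
Qed.
Lemma div_le_r t a b : 0 < t -> a * / t <= b -> a <= t * b.
Proof.
move=> ht h; have e : a = a * / t * t by field; lra.
rewrite e; nra.
Qed.

Definition X2 n (i j : 'I_n) (c : C) : mat C n 1 :=
  fun a _ => if a == i then C1 else if a == j then c else C0.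
Definition ci : C := mkC 0 1.

Section Mats3.
Variable W : starVS.
Hypothesis HW : is_starVS W.

Lemma scalC1 (x : W) c : Cmul (Cconj C1) c = c.
Proof. apply: Ceq => /=; ring. Qed.

Lemma congr_two n (M : mat W n n) i j c : i != j ->
  congr (X2 i j c) M ord0 ord0 =
  vadd (vadd (M i i) (vscal c (M i j)))
       (vadd (vscal (Cconj c) (M j i)) (vscal (Cmul (Cconj c) c) (M j j))).
Proof.
move=> hij; have hji : j != i by rewrite eq_sym.
rewrite /congr (@vsum_two _ HW _ _ i j hij); last first.
  move=> a hai haj; apply: (vsum_zero HW) => b; rewrite /X2 (negbTE hai) (negbTE haj).
  rewrite -(scal0 HW (M a b)); congr vscal; apply: Ceq => /=; ring.
congr vadd.
  rewrite (@vsum_two _ HW _ _ i j hij); last first.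
    move=> b hbi hbj; rewrite /X2 (negbTE hbi) (negbTE hbj) eqxx.
    rewrite -(scal0 HW (M i b)); congr vscal; apply: Ceq => /=; ring.
  rewrite /X2 eqxx (negbTE hji) eqxx -{2}(scal1 HW (M i i)); congr vadd; congr vscal;
    apply: Ceq => /=; ring.
rewrite (@vsum_two _ HW _ _ i j hij); last first.
  move=> b hbi hbj; rewrite /X2 (negbTE hbi) (negbTE hbj).
  rewrite -(scal0 HW (M j b)); congr vscal; apply: Ceq => /=; ring.
rewrite /X2 eqxx (negbTE hji) eqxx; congr vadd; congr vscal; apply: Ceq => /=; ring.
Qed.

Variable S : W -> Prop.
Hypothesis HS : is_sa_subspace S.

Lemma offdiag_S (a u w d : W) :
  let T c := vadd (vadd a (vscal c u)) (vadd (vscal (Cconj c) w) (vscal (Cmul (Cconj c) c) d)) in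
  S a -> S d -> S (T C1) -> S (T ci) -> S u.
Proof.
move=> T ha hd h1 h2.
have lin : forall b c, S (vadd (vadd a b) (vadd c d)) -> S (vadd b c).
  move=> b c h; have := SD HS h (SN HW HS (SD HS ha hd)).
  rewrite (oppD HW) (addACA HW) (addC HW a b) -(addA HW b) (addxN HW) (addx0 HW).
  by rewrite -(addA HW c) (addxN HW) (addx0 HW).
have e1 : Cconj C1 = C1 by apply: Ceq => /=; ring.
have e2 : Cmul C1 C1 = C1 by apply: Ceq => /=; ring.
have e3 : Cmul (Cconj ci) ci = C1 by apply: Ceq => /=; ring.
move: h1 h2; rewrite /T e1 e2 e3 !(scal1 HW) => /lin h1 /lin h2.
have h3 := SZ HS (Cconj ci) h2.
rewrite (scalDr HW) !(scalM HW) in h3.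
have e4 : Cmul (Cconj ci) ci = C1 by apply: Ceq => /=; ring.
have e5 : Cmul (Cconj ci) (Cconj ci) = RtoC (-1) by apply: Ceq => /=; ring.
rewrite e4 e5 (scal1 HW) -(oppE HW) in h3.
have h4 := SD HS h1 h3.
rewrite (addACA HW) (addxN HW) (addx0 HW) in h4.
have := SZ HS (RtoC (/2)) h4; by rewrite (half_twice HW).
Qed.

End Mats3.

Section Main.
Unset Implicit Arguments.
Variable V : starVS.
Variable nu : forall n, mat V n n -> R.
Variable S : V -> Prop.
Hypothesis HL : LinfMOS nu.
Hypothesis HI : LinfMOS_ideal nu S.

Let HV : is_starVS V := proj1 HL.
Let HS : is_sa_subspace S := proj1 HI.
Local Notation QV := (quotVS V S).
Let HQ : is_starVS QV := quot_starVS HV HS.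
Local Notation q := (qgauge V S nu).

Lemma nu_ge0 n (A : mat V n n) : (0 < n)%N -> is_sa A -> 0 <= nu n A.
Proof. by move=> hn hA; case: (proj1 (proj2 HL) n hn) => h _; apply: h. Qed.
Lemma nu_add n (A B : mat V n n) : (0 < n)%N -> is_sa A -> is_sa B ->
  nu n (madd A B) <= nu n A + nu n B.
Proof. by move=> hn hA hB; case: (proj1 (proj2 HL) n hn) => _ [h _]; apply: h. Qed.
Lemma nu_scal n t (A : mat V n n) : (0 < n)%N -> 0 < t -> is_sa A ->
  nu n (mrscal t A) = t * nu n A.
Proof. by move=> hn ht hA; case: (proj1 (proj2 HL) n hn) => _ [_ [h _]]; apply: h. Qed.
Lemma nu_congr n k (X : mat C n k) (A : mat V n n) r : (0 < n)%N -> (0 < k)%N ->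
  is_sa A -> is_opnorm X r -> nu k (congr X A) <= r * r * nu n A.
Proof. by move=> hn hk hA hr; exact: (proj1 (proj2 (proj2 HL)) n k hn hk X A r hA hr). Qed.
Lemma nu_dsum n k (A : mat V n n) (B : mat V k k) : (0 < n)%N -> (0 < k)%N ->
  is_sa A -> is_sa B -> nu (n + k)%N (dsum A B) = Rmax (nu n A) (nu k B).
Proof. by move=> hn hk hA hB; exact: (proj2 (proj2 (proj2 HL)) n k hn hk A B hA hB). Qed.

Definition Qset n (A : mat QV n n) :=
  fun s => exists B : mat V n n, is_sa B /\ lifts B A /\ s = nu n B.

Lemma q_spec n (A : mat QV n n) : (0 < n)%N -> is_sa A -> is_inf (Qset n A) (q n A).
Proof.
move=> hn hA; have [B [hB hl]] := lift_sa_ex HV HS hA.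
have [r hr] : exists r, is_inf (Qset n A) r.
  apply: inf_ex; first by exists (nu n B), B.
  by move=> s [B' [hB' [_ ->]]]; apply: nu_ge0.
rewrite /qgauge; apply: epsilon_spec; by exists r.
Qed.

Lemma q_le n (A : mat QV n n) (B : mat V n n) : (0 < n)%N -> is_sa A ->
  is_sa B -> lifts B A -> q n A <= nu n B.
Proof. move=> hn hA hB hl; case: (q_spec n A hn hA) => h _; apply: h; by exists B. Qed.

Lemma q_glb n (A : mat QV n n) r : (0 < n)%N -> is_sa A ->
  (forall B : mat V n n, is_sa B -> lifts B A -> r <= nu n B) -> r <= q n A.
Proof.
move=> hn hA h; case: (q_spec n A hn hA) => _; apply => s [B [hB [hl ->]]]; exact: h.
Qed.

Lemma q_approx n (A : mat QV n n) eps : (0 < n)%N -> is_sa A -> 0 < eps ->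
  exists B : mat V n n, is_sa B /\ lifts B A /\ nu n B < q n A + eps.
Proof.
move=> hn hA he; apply: NNPP => hno.
have : q n A + eps <= q n A.
  apply: q_glb => // B hB hl; apply: Rnot_lt_le => hlt; apply: hno; by exists B.
lra.
Qed.

Lemma q_ge0 n (A : mat QV n n) : (0 < n)%N -> is_sa A -> 0 <= q n A.
Proof. move=> hn hA; apply: q_glb => // B hB _; exact: nu_ge0. Qed.

Lemma q_sub n (A B : mat QV n n) : (0 < n)%N -> is_sa A -> is_sa B ->
  q n (madd A B) <= q n A + q n B.
Proof.
move=> hn hA hB; have hAB := sa_madd HQ hA hB.
suff : q n (madd A B) - q n B <= q n A by lra.
apply: q_glb => // B1 hB1 l1.
suff : q n (madd A B) - nu n B1 <= q n B by lra.
apply: q_glb => // B2 hB2 l2.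
have := q_le n (madd A B) (madd B1 B2) hn hAB (sa_madd HV hB1 hB2) (lifts_madd HV HS l1 l2).
have := nu_add n B1 B2 hn hB1 hB2; lra.
Qed.

Lemma q_scal n t (A : mat QV n n) : (0 < n)%N -> 0 < t -> is_sa A ->
  q n (mrscal t A) = t * q n A.
Proof.
move=> hn ht hA; have htA : is_sa (mrscal t A) by apply: (sa_mrscal HQ).
apply: Rle_antisym.
  apply: div_le_r => //; apply: q_glb => // B1 hB1 l1.
  apply: div_le_l => //; rewrite -nu_scal //.
  apply: q_le => //; [exact: (sa_mrscal HV) | exact: (lifts_mrscal HV HS)].
apply: q_glb => // C1 hC1 l1.
have hit : 0 < / t by apply: Rinv_0_lt_compat.
have hle : q n A <= nu n (mrscal (/ t) C1).
  apply: q_le => //; first exact: (sa_mrscal HV).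
  have := lifts_mrscal HV HS (/ t) l1.
  by rewrite (mrscalM HQ) Rinv_l ?(mrscal1 HQ) //; lra.
move: hle; rewrite nu_scal // => hle.
have e : t * (/ t * nu n C1) = nu n C1 by field; lra.
rewrite -e; apply: Rmult_le_compat_l; lra.
Qed.

Lemma q_congr n k (X : mat C n k) (A : mat QV n n) r : (0 < n)%N -> (0 < k)%N ->
  is_sa A -> is_opnorm X r -> q k (congr X A) <= r * r * q n A.
Proof.
move=> hn hk hA hr; have hcA := sa_congr HQ X hA.
have hle : forall B, is_sa B -> lifts B A -> q k (congr X A) <= r * r * nu n B.
  move=> B hB l; apply: Rle_trans (nu_congr n k X B r hn hk hB hr).
  apply: q_le => //; [exact: (sa_congr HV) | exact: (lifts_congr HV HS)].
have hrr : 0 <= r * r by nra.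
case: (Rle_lt_or_eq_dec _ _ hrr) => hr2.
  apply: div_le_r => //; apply: q_glb => // B hB l; apply: div_le_l => //; exact: hle.
have [B [hB l]] := lift_sa_ex HV HS hA.
have := hle B hB l; rewrite -hr2 !Rmult_0_l => h; lra.
Qed.

Lemma q_dsum n k (A : mat QV n n) (B : mat QV k k) : (0 < n)%N -> (0 < k)%N ->
  is_sa A -> is_sa B -> q (n + k)%N (dsum A B) = Rmax (q n A) (q k B).
Proof.
move=> hn hk hA hB; have hD := sa_dsum HQ hA hB.
have hnk : (0 < n + k)%N by rewrite addn_gt0 hn.
apply: Rle_antisym.
  apply: Rnot_lt_le => hlt.
  set eps := q (n + k)%N (dsum A B) - Rmax (q n A) (q k B).
  have he : 0 < eps by rewrite /eps; lra.
  have [B1 [hB1 [l1 h1]]] := q_approx n A eps hn hA he.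
  have [B2 [hB2 [l2 h2]]] := q_approx k B eps hk hB he.
  have := q_le (n + k)%N (dsum A B) (dsum B1 B2) hnk hD (sa_dsum HV hB1 hB2)
    (lifts_dsum l1 l2).
  rewrite nu_dsum // => h3.
  have : Rmax (nu n B1) (nu k B2) < Rmax (q n A) (q k B) + eps.
    apply: Rmax_lub_lt.
      apply: Rlt_le_trans h1 _; have := Rmax_l (q n A) (q k B); lra.
    apply: Rlt_le_trans h2 _; have := Rmax_r (q n A) (q k B); lra.
  rewrite /eps; lra.
apply: q_glb => // D hDs lD.
have hD0 := nu_ge0 _ D hnk hDs.
apply: Rmax_lub.
  have [r [hr [hr0 hr1]]] := incl_opnorm (@lshift_inj n k).
  have := nu_congr _ _ _ D r hnk hn hDs hr.
  have := q_le n A (congr (incl (@lshift n k)) D) hn hA (sa_congr HV _ hDs).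
  rewrite -{1}(congr_dsum_l HQ A B) => /(_ (lifts_congr HV HS _ lD)).
  move=> h1 h2; have : r * r * nu (n + k)%N D <= nu (n + k)%N D.
    have : r * r <= 1 by nra.
    nra.
  lra.
have [r [hr [hr0 hr1]]] := incl_opnorm (@rshift_inj n k).
have := nu_congr _ _ _ D r hnk hk hDs hr.
have := q_le k B (congr (incl (@rshift n k)) D) hk hB (sa_congr HV _ hDs).
rewrite -{1}(congr_dsum_r HQ A B) => /(_ (lifts_congr HV HS _ lD)).
move=> h1 h2; have : r * r * nu (n + k)%N D <= nu (n + k)%N D.
  have : r * r <= 1 by nra.
  nra.
lra.
Qed.

Lemma sub_sub (x c : V) : vadd x (vopp (vadd x (vopp c))) = c.
Proof.
by rewrite (oppD HV) (oppK HV) (addA HV) (addxN HV) (add0x HV).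
Qed.
Lemma add_sub (x c : V) : vadd (vadd x c) (vopp x) = c.
Proof. by rewrite (addC HV x c) -(addA HV) (addxN HV) (addx0 HV). Qed.

Lemma q_proper n (A : mat QV n n) : (0 < n)%N -> is_sa A -> q n A = 0 ->
  q n (mopp A) = 0 -> A = @mzero QV n.
Proof.
move=> hn hA hq hqN.
have hNA : is_sa (mopp A) := sa_mopp HQ hA.
have [B0 [hB0 l0]] := lift_sa_ex HV HS hA.
have pos : forall m : nat, 0 < / (INR m + 1).
  move=> m; apply: Rinv_0_lt_compat; have := pos_INR m; lra.
pose P1 m B := is_sa B /\ lifts B A /\ nu n B < q n A + / (INR m + 1).
pose P2 m B := is_sa B /\ lifts B (mopp A) /\ nu n B < q n (mopp A) + / (INR m + 1).
pose Bs m := epsilon (inhabits (@mzero V n)) (P1 m).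
pose Cs m := epsilon (inhabits (@mzero V n)) (P2 m).
have hBs : forall m, P1 m (Bs m).
  move=> m; apply: epsilon_spec; exact: q_approx n A _ hn hA (pos m).
have hCs : forall m, P2 m (Cs m).
  move=> m; apply: epsilon_spec; exact: q_approx n (mopp A) _ hn hNA (pos m).
have h10 : (0 < 1)%N by [].
have key : forall X : mat C n 1, S (congr X B0 ord0 ord0).
  move=> X; have [r hr] := col_opnorm X.
  have sa1 : forall M : mat V n n, is_sa M -> Vsa (congr X M ord0 ord0).
    by move=> M hM; rewrite /Vsa (saE (sa_congr HV X hM)).
  have cS : forall M : mat V n n, (forall i j, S (M i j)) -> S (congr X M ord0 ord0).
    move=> M hM; apply: (Svsum HS) => i; apply: (Svsum HS) => j; apply: (SZ HS); exact: hM.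
  have m11E : forall M : mat V n n, m11 (congr X M ord0 ord0) = congr X M.
    move=> M; apply: functional_extensionality => p; apply: functional_extensionality => p'.
    by rewrite (ord1 p) (ord1 p').
  have bnd : forall M : mat V n n, is_sa M ->
      0 <= nu 1%N (congr X M) <= r * r * nu n M.
    move=> M hM; split; first exact: nu_ge0 _ _ h10 (sa_congr HV X hM).
    have := nu_congr n 1 X M r hn h10 hM hr. exact.
  have hrr : 0 <= r * r by nra.
  have HI2 := proj2 HI.
  apply: (proj1 (HI2 (congr X B0 ord0 ord0) (sa1 B0 hB0) _)).
  exists (fun m => congr X (madd B0 (mopp (Bs m))) ord0 ord0).
  exists (fun m => congr X (madd B0 (Cs m)) ord0 ord0).
  split; [|split; [|split]].
  - move=> m; have [hb [lb _]] := hBs m; split.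
      by apply: cS => i j; rewrite /madd /mopp; apply: (lifts_diff HV HS l0 lb).
    apply: sa1; apply: (sa_madd HV hB0); exact: (sa_mopp HV).
  - move=> m; have [hc [lc _]] := hCs m; split.
      apply: cS; apply: (lifts_zeroS HV HS).
      have := lifts_madd HV HS l0 lc.
      have -> : madd A (mopp A) = @mzero QV n; last by [].
      apply: functional_extensionality => i; apply: functional_extensionality => j.
      exact: (addxN HQ).
    apply: sa1; exact: (sa_madd HV hB0).
  - apply: (@cv0_squeeze _ (r * r)) => // m.
    rewrite congr_madd // congr_mopp // /madd /mopp sub_sub m11E.
    have [hb [lb hlt]] := hBs m; have := bnd _ hb; rewrite hq in hlt.
    move=> [h0 h1]; split => //; apply: Rle_trans h1 _; apply: Rmult_le_compat_l => //; lra.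
  - apply: (@cv0_squeeze _ (r * r)) => // m.
    rewrite congr_madd // /madd add_sub m11E.
    have [hc [lc hlt]] := hCs m; have := bnd _ hc; rewrite hqN in hlt.
    move=> [h0 h1]; split => //; apply: Rle_trans h1 _; apply: Rmult_le_compat_l => //; lra.
have diag : forall i, S (B0 i i).
  move=> i; have := key (incl (fun _ : 'I_1 => i)).
  rewrite (congr_incl HV) // => x y _; by rewrite (ord1 x) (ord1 y).
apply: (lifts_zero HV HS l0) => i j.
case: (eqVneq i j) => [<- | hij]; first exact: diag.
have h1 := key (X2 i j C1); have h2 := key (X2 i j ci).
rewrite (congr_two HV _ _ hij) in h1; rewrite (congr_two HV _ _ hij) in h2.
exact: (offdiag_S HV HS (diag i) (diag j) h1 h2).
Qed.

End Main.

Theorem theorem3p19 (V : starVS) (nu : forall n, mat V n n -> R) (S : V -> Prop) :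
  LinfMOS nu -> LinfMOS_ideal nu S -> @LinfMOS (quotVS V S) (qgauge V S nu).
Proof.
move=> HL HI.
have HV : is_starVS V := proj1 HL.
have HS : is_sa_subspace S := proj1 HI.
split; first exact: quot_starVS.
split.
  move=> n hn; split; [|split; [|split]].
  - move=> A hA; exact: q_ge0.
  - move=> A B hA hB; exact: q_sub.
  - move=> t A ht hA; exact: q_scal.
  - move=> A hA h1 h2; exact: (q_proper V nu S HL HI n A hn hA h1 h2).
split.
  move=> n k hn hk X A r hA hr; exact: q_congr.
move=> n k hn hk A B hA hB; exact: q_dsum.
Qed.
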